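(* Let $K\ge 1$ be an integer, let $\underline{A}\in\mathbb{R}^{K\times K}$ be a symmetric, negative definite, $m$-banded matrix, and let $\underline{P}=[p_{i,j}]\in\mathbb{R}^{K\times K}$. Let $a=\lambda_{\min}(\underline{A})<0$, $b=\lambda_{\max}(\underline{A})<0$, $\kappa=a/b$, and set $m_1=Km$, $$\tau_1=\frac{1}{2|b|}\max\Big\{1,\frac{(1+\sqrt{\kappa})^2}{2\kappa}\Big\},\qquad \rho_1=\Big(\frac{\sqrt{\kappa}-1}{\sqrt{\kappa}+1}\Big)^{2/m_1}.$$ For $i,j\in\{1,\dots,K\}$ let $\underline{X}_{i,j}\in\mathbb{R}^{K\times K}$ be the unique solution of $\underline{A}\underline{X}_{i,j}+\underline{X}_{i,j}\underline{A}=\mathbf{q}_i p_{i,j}\mathbf{q}_j^T$, let $\overline{\mathbf{x}}_{i,j}=\mathrm{vec}(\underline{X}_{i,j})$ and denote its $s$-th entry ($s=1,\dots,K^2$) by $\overline{x}^{i,j}_s$. Let $\phi(i,j)=(j-1)K+i$. Then for all $i,j,s$, $$|\overline{x}^{i,j}_s|\le |p_{i,j}|\,\tau_1\,\rho_1^{|\phi(i,j)-s|}.$$ Moreover, if $\underline{X}$ is the unique solution of $\underline{A}\underline{X}+\underline{X}\underline{A}=\underline{P}$ and $\overline{x}_s$ denotes the $s$-th entry of $\mathrm{vec}(\underline{X})$, then $$|\overline{x}_s|\le \tau_1\sum_{i=1}^{K}\sum_{j=1}^{K}|p_{i,j}|\,\rho_1^{|\phi(i,j)-s|}\quad\text{for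 all } s=1,\dots,K^2.$$
   Context: A $K\times K$ matrix $Z=[z_{i,j}]$ is called $s$-banded (bandwidth $s$, $s$ an even positive integer) if $z_{i,j}=0$ whenever $|i-j|>s/2$. $\mathbf{q}_j\in\mathbb{R}^K$ denotes the $j$-th standard basis vector (all zeros except a $1$ in position $j$). $\mathrm{vec}(\cdot)$ is the standard column-stacking operator. $\lambda_{\min},\lambda_{\max}$ denote the minimal and maximal eigenvalues. *)

(* Defs.v *)
(* real analysis (sqrt, real powers) needed; matrices are
   functions nat -> nat -> R, only entries with indices < K are relevant
   (0-based indexing). *)
From Stdlib Require Import Reals.
Open Scope R_scope.

Fixpoint rsum (n : nat) (f : nat -> R) : R :=
  match n with
  | O => 0
  | S k => rsum k f + f k
  end.

Definition mat := nat -> nat -> R.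
Definition vect := nat -> R.

Definition mvmul (K : nat) (A : mat) (v : vect) (i : nat) : R :=
  rsum K (fun k => A i k * v k).

Definition mmul (K : nat) (A B : mat) (i j : nat) : R :=
  rsum K (fun k => A i k * B k j).

Definition nonzero_vect (K : nat) (v : vect) : Prop :=
  exists i, (i < K)%nat /\ v i <> 0.

Definition symmetric (K : nat) (A : mat) : Prop :=
  forall i j, (i < K)%nat -> (j < K)%nat -> A i j = A j i.

Definition neg_definite (K : nat) (A : mat) : Prop :=
  forall v, nonzero_vect K v -> rsum K (fun i => v i * mvmul K A v i) < 0.

Definition banded (K : nat) (s : nat) (A : mat) : Prop :=
  forall i j, (i < K)%nat -> (j < K)%nat ->
    Rabs (INR i - INR j) > INR s / 2 -> A i j = 0.

Definition is_eigenvalue (K : nat) (A : mat) (l : R) : Prop :=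
  exists v, nonzero_vect K v /\
    forall i, (i < K)%nat -> mvmul K A v i = l * v i.

Definition is_lambda_min (K : nat) (A : mat) (a : R) : Prop :=
  is_eigenvalue K A a /\ forall l, is_eigenvalue K A l -> a <= l.

Definition is_lambda_max (K : nat) (A : mat) (b : R) : Prop :=
  is_eigenvalue K A b /\ forall l, is_eigenvalue K A l -> l <= b.

Definition solves_lyap (K : nat) (A X C : mat) : Prop :=
  forall r c, (r < K)%nat -> (c < K)%nat ->
    mmul K A X r c + mmul K X A r c = C r c.

Definition elem_rhs (i j : nat) (p : R) : mat :=
  fun r c => if andb (Nat.eqb r i) (Nat.eqb c j) then p else 0.

(* 0-based vec: entry s of vec(X) is X (s mod K) (s / K) *)
Definition vec_entry (K : nat) (X : mat) (s : nat) : R :=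
  X (Nat.modulo s K) (Nat.div s K).

(* 0-based phi(i,j) = j*K + i  (1-based: (j-1)K + i) *)
Definition phi (K i j : nat) : nat := (j * K + i)%nat.

Definition natdist (x y : nat) : nat := ((x - y) + (y - x))%nat.

Definition kappa (a b : R) : R := a / b.

Definition tau1 (a b : R) : R :=
  / (2 * Rabs b) * Rmax 1 ((1 + sqrt (kappa a b)) ^ 2 / (2 * kappa a b)).

Definition rho_base (a b : R) : R :=
  (sqrt (kappa a b) - 1) / (sqrt (kappa a b) + 1).

(* rho1 = base^(2/m1); the case base = 0 gives 0 (Rpower 0 _ would be 1) *)
Definition rho1 (K m : nat) (a b : R) : R :=
  if Req_EM_T (rho_base a b) 0 then 0
  else Rpower (rho_base a b) (2 / INR (K * m)).

(* Main.v *)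
Require Import Defs.
From Stdlib Require Import Reals Lra Lia Psatz FunctionalExtensionality Classical IndefiniteDescription.
Open Scope R_scope.

Module Bridge.
From mathcomp Require Import all_boot all_algebra.
From mathcomp Require Import Rstruct.
Import GRing.Theory.
Local Open Scope ring_scope.

Lemma rsum_big n f : rsum n f = (\sum_(i < n) f i).
Proof.
elim: n => [|n IH] /=; first by rewrite big_ord0.
by rewrite big_ord_recr /= IH.
Qed.

Lemma inj_surj n (N : nat -> nat -> R) :
  (forall v : nat -> R, (forall i, lt i n -> rsum n (fun k => Rmult (N i k) (v k)) = R0) ->
     forall i, lt i n -> v i = R0) ->
  forall y : nat -> R, exists x : nat -> R,
    forall i, lt i n -> rsum n (fun k => Rmult (N i k) (x k)) = y i.
Proof.
move=> Hinj y.
pose M : 'M[R]_n := \matrix_(i < n, j < n) N i j.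
have HU : M \in unitmx.
  rewrite -unitmx_tr -row_free_unit -kermx_eq0.
  apply/eqP/matrixP => i j; rewrite [RHS]mxE.
  pose u := row i (kermx M^T).
  have Hu : u *m M^T = 0 by rewrite /u -row_mul mulmx_ker row0.
  pose v := fun k : nat => if (k < n)%N =P true is ReflectT Hk then u ord0 (Ordinal Hk) else R0.
  have Hv : forall k : 'I_n, v k = u ord0 k.
    move=> k; rewrite /v; case: eqP => Hk'; first by congr (u _ _); apply: val_inj.
    by exfalso; apply: Hk'; exact: ltn_ord.
  have Hz : v j = R0.
  apply: (Hinj v _ j (ltP (ltn_ord j))) => i' /ltP Hi'.
  rewrite rsum_big; transitivity ((u *m M^T) ord0 (Ordinal Hi')); last by rewrite Hu mxE.
  rewrite mxE; apply: eq_bigr => k _; rewrite Hv !mxE /=.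
  by rewrite mulrC.
  by move: Hz; rewrite Hv /u mxE.
pose yc : 'cV[R]_n := \col_(i < n) y i.
pose x := invmx M *m yc.
have Hx : M *m x = yc by rewrite /x mulKVmx.
exists (fun k => if (k < n)%N =P true is ReflectT Hk then x (Ordinal Hk) ord0 else 0%R).
move=> i /ltP Hi.
have := congr1 (fun B : 'cV_n => B (Ordinal Hi) ord0) Hx.
rewrite [LHS]mxE rsum_big /yc mxE => <-.
apply: eq_bigr => k _; rewrite [M _ _]mxE /=.
case: eqP => Hk'; first by congr (_ * x _ _); apply: val_inj.
by exfalso; apply: Hk'; exact: ltn_ord.
Qed.
End Bridge.


Lemma rsum_ext n f g : (forall k, (k < n)%nat -> f k = g k) -> rsum n f = rsum n g.
Proof. induction n; simpl; intros H; auto. rewrite IHn by (intros; apply H; lia). rewrite H by lia; auto. Qed.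

Lemma rsum_plus n f g : rsum n (fun k => f k + g k) = rsum n f + rsum n g.
Proof. induction n; simpl; [lra|]. rewrite IHn; lra. Qed.

Lemma rsum_minus n f g : rsum n (fun k => f k - g k) = rsum n f - rsum n g.
Proof. induction n; simpl; [lra|]. rewrite IHn; lra. Qed.

Lemma rsum_scal n c f : rsum n (fun k => c * f k) = c * rsum n f.
Proof. induction n; simpl; [lra|]. rewrite IHn; lra. Qed.

Lemma rsum_scalr n c f : rsum n (fun k => f k * c) = rsum n f * c.
Proof. induction n; simpl; [lra|]. rewrite IHn; lra. Qed.

Lemma rsum_zero n f : (forall k, (k < n)%nat -> f k = 0) -> rsum n f = 0.
Proof. intros H. rewrite (rsum_ext n f (fun _ => 0)) by auto. induction n; simpl; auto. rewrite IHn; [lra|]. intros; apply H; lia. Qed.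

Lemma rsum_swap n m (f : nat -> nat -> R) :
  rsum n (fun i => rsum m (fun j => f i j)) = rsum m (fun j => rsum n (fun i => f i j)).
Proof.
induction n; simpl.
- symmetry; apply rsum_zero; auto.
- rewrite IHn. rewrite <- rsum_plus. auto.
Qed.

Lemma rsum_le n f g : (forall k, (k < n)%nat -> f k <= g k) -> rsum n f <= rsum n g.
Proof. induction n; simpl; intros H; [lra|]. assert (H1 := H n (Nat.lt_succ_diag_r n)). assert (rsum n f <= rsum n g) by (apply IHn; intros; apply H; lia). lra. Qed.

Lemma rsum_nonneg n f : (forall k, (k < n)%nat -> 0 <= f k) -> 0 <= rsum n f.
Proof. intros H. replace 0 with (rsum n (fun _ => 0)). apply rsum_le; auto. apply rsum_zero; auto. Qed.

Lemma rsum_single n f j : (j < n)%nat -> (forall k, (k < n)%nat -> k <> j -> f k = 0) -> rsum n f = f j.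
Proof.
induction n; intros Hj H; [lia|]. simpl.
destruct (Nat.eq_dec j n) as [->|Hne].
- rewrite rsum_zero; [lra|]. intros k Hk; apply H; lia.
- rewrite IHn by (try lia; intros; apply H; lia). rewrite (H n) by lia. lra.
Qed.

Lemma term_le_rsum n f j : (forall k, (k < n)%nat -> 0 <= f k) -> (j < n)%nat -> f j <= rsum n f.
Proof.
induction n; intros H Hj; [lia|]. simpl.
destruct (Nat.eq_dec j n) as [->|Hne].
- assert (0 <= rsum n f) by (apply rsum_nonneg; intros; apply H; lia). lra.
- assert (f j <= rsum n f) by (apply IHn; try lia; intros; apply H; lia).
  assert (0 <= f n) by (apply H; lia). lra.
Qed.

Lemma rsum_abs n f : Rabs (rsum n f) <= rsum n (fun k => Rabs (f k)).
Proof. induction n; simpl. rewrite Rabs_R0; lra. eapply Rle_trans; [apply Rabs_triang|]. lra. Qed.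

Lemma rsum_add_split n m f : rsum (n + m) f = rsum n f + rsum m (fun k => f (n + k)%nat).
Proof. induction m; simpl. rewrite Nat.add_0_r; lra. rewrite Nat.add_succ_r; simpl. rewrite IHm; lra. Qed.

Lemma rsum_mul_split K n f : rsum (n * K) f = rsum n (fun c => rsum K (fun k => f (c * K + k)%nat)).
Proof. induction n; simpl; auto. rewrite Nat.add_comm, rsum_add_split, IHn. auto. Qed.

Definition ip (K : nat) (X Y : mat) : R := rsum K (fun r => rsum K (fun c => X r c * Y r c)).
Definition madd (X Y : mat) : mat := fun r c => X r c + Y r c.
Definition msub (X Y : mat) : mat := fun r c => X r c - Y r c.
Definition msc (l : R) (X : mat) : mat := fun r c => l * X r c.
Definition mzero : mat := fun _ _ => 0.

Lemma ip_sym K X Y : ip K X Y = ip K Y X.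
Proof. unfold ip. apply rsum_ext; intros; apply rsum_ext; intros; ring. Qed.
Lemma ip_addl K X Y Z : ip K (madd X Y) Z = ip K X Z + ip K Y Z.
Proof. unfold ip, madd. rewrite <- rsum_plus. apply rsum_ext; intros. rewrite <- rsum_plus. apply rsum_ext; intros; ring. Qed.
Lemma ip_subl K X Y Z : ip K (msub X Y) Z = ip K X Z - ip K Y Z.
Proof. unfold ip, msub. rewrite <- rsum_minus. apply rsum_ext; intros. rewrite <- rsum_minus. apply rsum_ext; intros; ring. Qed.
Lemma ip_scl K l X Y : ip K (msc l X) Y = l * ip K X Y.
Proof. unfold ip, msc. rewrite <- rsum_scal. apply rsum_ext; intros. rewrite <- rsum_scal. apply rsum_ext; intros; ring. Qed.
Lemma ip_addr K X Y Z : ip K Z (madd X Y) = ip K Z X + ip K Z Y.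
Proof. rewrite ip_sym, ip_addl, (ip_sym K X), (ip_sym K Y); auto. Qed.
Lemma ip_subr K X Y Z : ip K Z (msub X Y) = ip K Z X - ip K Z Y.
Proof. rewrite ip_sym, ip_subl, (ip_sym K X), (ip_sym K Y); auto. Qed.
Lemma ip_scr K l X Y : ip K Y (msc l X) = l * ip K Y X.
Proof. rewrite ip_sym, ip_scl, ip_sym; auto. Qed.
Lemma ip_zerol K Y : ip K mzero Y = 0.
Proof. unfold ip, mzero. apply rsum_zero; intros; apply rsum_zero; intros; ring. Qed.
Lemma ip_nonneg K X : 0 <= ip K X X.
Proof. unfold ip. apply rsum_nonneg; intros; apply rsum_nonneg; intros. nra. Qed.
Lemma ip_ext K X X' Y Y' : (forall r c, (r < K)%nat -> (c < K)%nat -> X r c = X' r c /\ Y r c = Y' r c) -> ip K X Y = ip K X' Y'.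
Proof. intros H. unfold ip. apply rsum_ext; intros; apply rsum_ext; intros. destruct (H k k0) as [-> ->]; auto. Qed.
Lemma ip_entry K X r c : (r < K)%nat -> (c < K)%nat -> X r c * X r c <= ip K X X.
Proof.
intros Hr Hc. unfold ip.
eapply Rle_trans; [| apply (term_le_rsum K _ r)]; auto.
- apply (term_le_rsum K (fun c0 => X r c0 * X r c0) c); auto. intros; nra.
- intros; apply rsum_nonneg; intros; nra.
Qed.
Lemma ip_zero_entries K X : ip K X X <= 0 -> forall r c, (r < K)%nat -> (c < K)%nat -> X r c = 0.
Proof. intros H r c Hr Hc. assert (H1 := ip_entry K X r c Hr Hc). nra. Qed.
Lemma Rabs_le_inv x b : Rabs x <= b -> - b <= x /\ x <= b.
Proof. unfold Rabs; destruct (Rcase_abs x); intros; lra. Qed.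
Lemma ip_zeror K Y : ip K Y mzero = 0.
Proof. rewrite ip_sym; apply ip_zerol. Qed.
Lemma sqr_ge0 x : 0 <= x * x.
Proof. apply Rle_0_sqr. Qed.


Section Op.
Variable K : nat.
Variable L : mat -> mat.
Hypothesis Ladd : forall X Y, L (madd X Y) = madd (L X) (L Y).
Hypothesis Lsc : forall l X, L (msc l X) = msc l (L X).
Hypothesis Lsym : forall X Y, ip K X (L Y) = ip K (L X) Y.

Lemma ipL X Y : ip K (L X) Y = ip K X (L Y).
Proof. symmetry; apply Lsym. Qed.

Lemma Lsub X Y : L (msub X Y) = msub (L X) (L Y).
Proof.
replace (msub X Y) with (madd X (msc (-1) Y)) by (apply functional_extensionality; intro r; apply functional_extensionality; intro c; unfold madd, msub, msc; ring).
rewrite Ladd, Lsc. apply functional_extensionality; intro r; apply functional_extensionality; intro c; unfold madd, msub, msc; ring.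
Qed.

Lemma Lzero : L mzero = mzero.
Proof.
replace mzero with (msc 0 mzero) at 1 by (apply functional_extensionality; intro r; apply functional_extensionality; intro c; unfold msc, mzero; ring).
rewrite Lsc. apply functional_extensionality; intro r; apply functional_extensionality; intro c; unfold msc, mzero; ring.
Qed.

Ltac expand := repeat (rewrite ?Ladd, ?Lsub, ?Lsc, ?ip_addl, ?ip_addr, ?ip_subl, ?ip_subr, ?ip_scl, ?ip_scr).
Ltac expand_in H := repeat (rewrite ?Ladd, ?Lsub, ?Lsc, ?ip_addl, ?ip_addr, ?ip_subl, ?ip_subr, ?ip_scl, ?ip_scr in H).

Lemma polar_t g X t : (forall Z, Rabs (ip K Z (L Z)) <= g * ip K Z Z) ->
  4 * t * ip K (L X) (L X) <= g * (2 * ip K X X + 2 * t * t * ip K (L X) (L X)).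
Proof.
intros H.
assert (H1 := H (madd X (msc t (L X)))).
assert (H2 := H (msub X (msc t (L X)))).
apply Rabs_le_inv in H1. apply Rabs_le_inv in H2.
expand_in H1. expand_in H2.
assert (E1 : ip K X (L (L X)) = ip K (L X) (L X)) by (rewrite ipL; auto).
assert (E2 : ip K (L X) X = ip K X (L X)) by apply ip_sym.
rewrite ?E1, ?E2 in H1. rewrite ?E1, ?E2 in H2. nra.
Qed.

Lemma polar g X : 0 <= g -> (forall Z, Rabs (ip K Z (L Z)) <= g * ip K Z Z) ->
  ip K (L X) (L X) <= g * g * ip K X X.
Proof.
intros Hg H.
assert (Hs := ip_nonneg K (L X)). assert (Hx := ip_nonneg K X).
destruct (Req_dec g 0) as [->|Hg0].
- assert (H1 := polar_t 0 X 1 H). nra.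
- assert (H1 := polar_t g X (/ g) H).
  assert (Hgp : 0 < g) by lra.
  set (s := ip K (L X) (L X)) in *. set (x := ip K X X) in *.
  assert (H2 : 4 * s <= g * g * (2 * x) + 2 * s).
  { replace (4 * s) with (g * (4 * / g * s)) by (field; lra).
    replace (g * g * (2 * x) + 2 * s) with (g * (g * (2 * x + 2 * / g * / g * s))) by (field; lra).
    apply Rmult_le_compat_l; [lra|]. nra. }
  lra.
Qed.

Definition D X := msub X (L (L X)).
Definition Rot (p : mat * mat) : mat * mat := (msub (L (fst p)) (D (snd p)), madd (fst p) (L (snd p))).
Definition Nrm (p : mat * mat) := ip K (fst p) (fst p) + ip K (snd p) (D (snd p)).
Definition padd (p q : mat * mat) := (madd (fst p) (fst q), madd (snd p) (snd q)).
Definition psc l (p : mat * mat) := (msc l (fst p), msc l (snd p)).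

Lemma Nrm_Rot p : Nrm (Rot p) = Nrm p.
Proof.
destruct p as [c u]. unfold Nrm, Rot, D; simpl. expand.
repeat rewrite ipL.
assert (E1 : ip K u (L c) = ip K c (L u)) by (rewrite ip_sym, ipL; auto).
assert (E2 : ip K u (L (L (L c))) = ip K c (L (L (L u)))) by (rewrite ip_sym, !ipL; auto).
assert (E3 : ip K u c = ip K c u) by apply ip_sym.
assert (E4 : ip K u (L (L c)) = ip K c (L (L u))) by (rewrite ip_sym, !ipL; auto).
rewrite ?E1, ?E2, ?E3, ?E4. ring.
Qed.

Lemma D_add X Y : D (madd X Y) = madd (D X) (D Y).
Proof. unfold D. rewrite !Ladd. apply functional_extensionality; intro r; apply functional_extensionality; intro c; unfold madd, msub; ring. Qed.
Lemma D_sc l X : D (msc l X) = msc l (D X).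
Proof. unfold D. rewrite !Lsc. apply functional_extensionality; intro r; apply functional_extensionality; intro c; unfold msc, msub; ring. Qed.

Lemma Rot_add p q : Rot (padd p q) = padd (Rot p) (Rot q).
Proof. unfold Rot, padd; simpl. rewrite Ladd, D_add, Ladd. f_equal; apply functional_extensionality; intro r; apply functional_extensionality; intro c; unfold madd, msub; ring. Qed.
Lemma Rot_sc l p : Rot (psc l p) = psc l (Rot p).
Proof. unfold Rot, psc; simpl. rewrite Lsc, D_sc, Lsc. f_equal; apply functional_extensionality; intro r; apply functional_extensionality; intro c; unfold madd, msc, msub; ring. Qed.

Lemma iter_add n p q : Nat.iter n Rot (padd p q) = padd (Nat.iter n Rot p) (Nat.iter n Rot q).
Proof. induction n; simpl; auto. rewrite IHn, Rot_add; auto. Qed.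
Lemma iter_sc n l p : Nat.iter n Rot (psc l p) = psc l (Nat.iter n Rot p).
Proof. induction n; simpl; auto. rewrite IHn, Rot_sc; auto. Qed.
Lemma Nrm_iter n p : Nrm (Nat.iter n Rot p) = Nrm p.
Proof. induction n; simpl; auto. rewrite Nrm_Rot; auto. Qed.

Lemma iter_S n p : Nat.iter (S n) Rot p = Nat.iter n Rot (Rot p).
Proof. induction n; simpl; auto. simpl in IHn. rewrite IHn; auto. Qed.

Lemma iter_plus n m p : Nat.iter (n + m) Rot p = Nat.iter n Rot (Nat.iter m Rot p).
Proof. induction n; simpl; auto. rewrite IHn; auto. Qed.

Definition w0 (X : mat) : mat * mat := (L X, msc (-1) X).

Lemma Rot_w0 X : Rot (w0 X) = (X, mzero).
Proof.
unfold Rot, w0, D; simpl. rewrite !Lsc. f_equal; apply functional_extensionality; intro r; apply functional_extensionality; intro c; unfold madd, msc, msub, mzero; ring.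
Qed.
Lemma Rot_X0 X : Rot (X, mzero) = (L X, X).
Proof.
unfold Rot, D; simpl. rewrite !Lzero. f_equal; apply functional_extensionality; intro r; apply functional_extensionality; intro c; unfold madd, msc, msub, mzero; ring.
Qed.

Lemma cheb_norm (rho : R) (X : mat) (n : nat) :
  (forall Z, Rabs (ip K Z (L Z)) <= ip K Z Z) ->
  let W := madd (madd (fst (Nat.iter (S (S n)) Rot (w0 X)))
                      (msc (-2 * rho) (fst (Nat.iter (S n) Rot (w0 X)))))
                (msc (rho * rho) (fst (Nat.iter n Rot (w0 X)))) in
  let G := msub (msc (1 + rho * rho) X) (msc (2 * rho) (L X)) in
  ip K W W <= ip K G G.
Proof.
intros Hf W G.
set (q := padd (padd (Nat.iter 2 Rot (w0 X)) (psc (-2 * rho) (Nat.iter 1 Rot (w0 X)))) (psc (rho * rho) (w0 X))).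
assert (HW : padd (padd (Nat.iter (S (S n)) Rot (w0 X)) (psc (-2 * rho) (Nat.iter (S n) Rot (w0 X)))) (psc (rho * rho) (Nat.iter n Rot (w0 X))) = Nat.iter n Rot q).
{ unfold q. rewrite !iter_add, !iter_sc. rewrite <- !iter_plus.
  replace (n + 2)%nat with (S (S n)) by lia. replace (n + 1)%nat with (S n) by lia. auto. }
assert (Hfst : fst (Nat.iter n Rot q) = W).
{ rewrite <- HW. unfold W, padd, psc; simpl. auto. }
assert (HN : Nrm (Nat.iter n Rot q) = ip K G G).
{ rewrite Nrm_iter. unfold q. simpl. rewrite Rot_w0, Rot_X0.
  unfold Nrm, padd, psc, w0, G, D; simpl. expand.
  assert (E1 : ip K (L X) X = ip K X (L X)) by apply ip_sym.
  assert (E2 : ip K X (L (L X)) = ip K (L X) (L X)) by (rewrite ipL; auto).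
  rewrite ?Lzero, ?ip_zerol, ?ip_zeror, ?E1, ?E2. ring. }
assert (Hpos : 0 <= ip K (snd (Nat.iter n Rot q)) (D (snd (Nat.iter n Rot q)))).
{ set (u := snd (Nat.iter n Rot q)). unfold D. rewrite ip_subr, <- ipL.
  assert (H := polar 1 u ltac:(lra) ltac:(intros Z; rewrite Rmult_1_l; apply Hf)). lra. }
unfold Nrm in HN. rewrite Hfst in HN. lra.
Qed.

End Op.


Definition sq K (v : vect) := rsum K (fun i => v i * v i).
Definition bil K (B : mat) (v w : vect) := rsum K (fun i => v i * mvmul K B w i).

Lemma sq_nonneg K v : 0 <= sq K v.
Proof. apply rsum_nonneg; intros; nra. Qed.
Lemma sq_entry K v i : (i < K)%nat -> v i * v i <= sq K v.
Proof. intros; apply (term_le_rsum K (fun i => v i * v i)); auto; intros; nra. Qed.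
Lemma sq_prod K v i j : (i < K)%nat -> (j < K)%nat -> Rabs (v i * v j) <= sq K v.
Proof.
intros Hi Hj. assert (H1 := sq_entry K v i Hi). assert (H2 := sq_entry K v j Hj).
set (x := v i) in *; set (y := v j) in *; clearbody x y.
pose proof (sqr_ge0 (x - y)). pose proof (sqr_ge0 (x + y)).
unfold Rabs; destruct (Rcase_abs (x * y)); nra.
Qed.
Lemma sq_zero K v : sq K v <= 0 -> forall i, (i < K)%nat -> v i = 0.
Proof. intros H i Hi. assert (H1 := sq_entry K v i Hi). nra. Qed.

Lemma mvmul_lin K B v w t i : mvmul K B (fun k => v k + t * w k) i = mvmul K B v i + t * mvmul K B w i.
Proof. unfold mvmul. rewrite <- rsum_scal, <- rsum_plus. apply rsum_ext; intros; ring. Qed.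

Lemma bil_sym K B v w : symmetric K B -> bil K B v w = bil K B w v.
Proof.
intros HB. unfold bil, mvmul.
rewrite (rsum_ext K (fun i => v i * rsum K (fun k => B i k * w k)) (fun i => rsum K (fun k => v i * B i k * w k))).
2:{ intros; rewrite <- rsum_scal; apply rsum_ext; intros; ring. }
rewrite rsum_swap. apply rsum_ext; intros k Hk.
rewrite <- rsum_scal; apply rsum_ext; intros i Hi. rewrite (HB i k) by auto. ring.
Qed.

Lemma bil_expand K B v w t : symmetric K B ->
  bil K B (fun k => v k + t * w k) (fun k => v k + t * w k) = bil K B v v + 2 * t * bil K B v w + t * t * bil K B w w.
Proof.
intros HB. assert (E : bil K B w v = bil K B v w) by (apply bil_sym; auto).
unfold bil at 1. rewrite (rsum_ext K _ (fun i => v i * mvmul K B v i + t * (v i * mvmul K B w i) + t * (w i * mvmul K B v i) + t * t * (w i * mvmul K B w i))).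
2:{ intros; rewrite mvmul_lin; ring. }
rewrite !rsum_plus, !rsum_scal. unfold bil in E |- *. rewrite E. ring.
Qed.

Lemma discr p q r : 0 <= r -> (forall t, 0 <= p + 2 * q * t + r * t * t) -> q * q <= p * r.
Proof.
intros Hr H. destruct (Req_dec r 0) as [->|Hr0].
- destruct (Req_dec q 0) as [->|Hq]; [nra|].
  assert (H1 := H (- (p + 1) / (2 * q))).
  replace (p + 2 * q * (- (p + 1) / (2 * q)) + 0 * (- (p + 1) / (2 * q)) * (- (p + 1) / (2 * q))) with (-1) in H1 by (field; auto). lra.
- assert (H1 := H (- q / r)).
  replace (p + 2 * q * (- q / r) + r * (- q / r) * (- q / r)) with ((p * r - q * q) / r) in H1 by (field; auto).
  assert (0 < r) by lra.
  apply Rmult_le_compat_r with (r := r) in H1; [|lra]. unfold Rdiv in H1. rewrite Rmult_assoc, Rinv_l in H1 by lra. lra.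
Qed.

Lemma bil_CS K B v w : symmetric K B -> (forall x, 0 <= bil K B x x) ->
  bil K B v w * bil K B v w <= bil K B v v * bil K B w w.
Proof.
intros HB Hpos. apply discr; [apply Hpos|]. intros t. assert (H := Hpos (fun k => v k + t * w k)). rewrite bil_expand in H by auto. nra.
Qed.

Definition form K A v := bil K A v v.

Lemma form_bound K A v : Rabs (form K A v) <= rsum K (fun i => rsum K (fun k => Rabs (A i k))) * sq K v.
Proof.
unfold form, bil, mvmul.
rewrite (rsum_ext K (fun i => v i * rsum K (fun k => A i k * v k)) (fun i => rsum K (fun k => A i k * (v i * v k)))).
2:{ intros; rewrite <- rsum_scal; apply rsum_ext; intros; ring. }
eapply Rle_trans; [apply rsum_abs|]. rewrite <- rsum_scalr. apply rsum_le; intros i Hi.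
eapply Rle_trans; [apply rsum_abs|]. rewrite <- rsum_scalr. apply rsum_le; intros k Hk.
rewrite Rabs_mult. apply Rmult_le_compat_l; [apply Rabs_pos|]. apply sq_prod; auto.
Qed.

Definition ev (j : nat) : vect := fun i => if Nat.eqb i j then 1 else 0.

Lemma rsum_ev K f j : (j < K)%nat -> rsum K (fun k => f k * ev j k) = f j.
Proof.
intros Hj. rewrite (rsum_single K _ j Hj). unfold ev; rewrite Nat.eqb_refl; ring.
intros k Hk Hne. unfold ev. apply Nat.eqb_neq in Hne. rewrite Hne. ring.
Qed.

Lemma ray_upper K A : (1 <= K)%nat -> symmetric K A ->
  exists mu, is_eigenvalue K A mu /\ forall v, form K A v <= mu * sq K v.
Proof.
intros HK HA.
set (GA := rsum K (fun i => rsum K (fun k => Rabs (A i k)))).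
set (S := fun r => exists v, 0 < sq K v /\ r = form K A v / sq K v).
assert (HSb : bound S).
{ exists GA. intros r [v [Hv ->]]. assert (H := form_bound K A v). apply Rabs_le_inv in H.
  apply Rmult_le_reg_r with (sq K v); auto. unfold Rdiv. rewrite Rmult_assoc, Rinv_l by lra. unfold GA. lra. }
assert (HSn : exists r, S r).
{ exists (form K A (ev 0) / sq K (ev 0)). exists (ev 0). split; auto.
  unfold sq. idtac.
  rewrite (rsum_ev K (ev 0) 0) by lia. unfold ev; simpl; lra. }
destruct (completeness S HSb HSn) as [mu [Hub Hlub]].
assert (Hup : forall v, form K A v <= mu * sq K v).
{ intros v. destruct (Rle_lt_dec (sq K v) 0) as [Hz|Hp].
  - assert (Hz' := sq_zero K v Hz). assert (sq K v = 0) by (assert (H := sq_nonneg K v); lra).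
    unfold form, bil. rewrite rsum_zero. rewrite H; lra. intros i Hi; rewrite Hz'; auto; ring.
  - assert (H := Hub _ (ex_intro _ v (conj Hp eq_refl))).
    apply Rmult_le_compat_r with (r := sq K v) in H; [|lra]. unfold Rdiv in H. rewrite Rmult_assoc, Rinv_l in H by lra. lra. }
exists mu. split; auto.
set (B := fun i k => (if Nat.eqb i k then mu else 0) - A i k).
assert (HBv : forall v i, (i < K)%nat -> mvmul K B v i = mu * v i - mvmul K A v i).
{ intros v i Hi. unfold mvmul, B. rewrite (rsum_ext K _ (fun k => mu * (v k * ev i k) - A i k * v k)).
  rewrite rsum_minus, rsum_scal, rsum_ev; auto.
  intros k Hk. unfold ev. rewrite (Nat.eqb_sym i k). destruct (Nat.eqb k i); ring. }
destruct (classic (exists v, nonzero_vect K v /\ forall i, (i < K)%nat -> mvmul K B v i = 0)) as [[v [Hnz Hv]]|Hno].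
{ exists v. split; auto. intros i Hi. specialize (Hv i Hi). rewrite HBv in Hv; auto. lra. }
exfalso.
assert (Hinj : forall v : vect, (forall i, (i < K)%nat -> rsum K (fun k => Rmult (B i k) (v k)) = R0) -> forall i, (i < K)%nat -> v i = R0).
{ intros v Hv i Hi. apply NNPP. intros Hne. apply Hno. exists v. split; [exists i; auto|]. exact Hv. }
assert (Hsurj := Bridge.inj_surj K B Hinj).
set (c := fun j => proj1_sig (constructive_indefinite_description _ (Hsurj (ev j)))).
assert (Hc : forall j i, (i < K)%nat -> mvmul K B (c j) i = ev j i).
{ intros j i Hi. unfold c. destruct (constructive_indefinite_description _ (Hsurj (ev j))) as [x Hx]. simpl. apply Hx; auto. }
assert (HBsym : symmetric K B).
{ intros i k Hi Hk. unfold B. rewrite Nat.eqb_sym, HA by auto. auto. }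

assert (HBpos : forall x, 0 <= bil K B x x).
{ intros x. unfold bil. rewrite (rsum_ext K _ (fun i => mu * (x i * x i) - x i * mvmul K A x i)).
  rewrite rsum_minus, rsum_scal. assert (H := Hup x). unfold form, bil, sq in H. lra.
  intros i Hi; rewrite HBv; auto; ring. }
set (G := rsum K (fun j => rsum K (fun i => Rabs (c j i)))).
assert (HG0 : 0 <= G) by (apply rsum_nonneg; intros; apply rsum_nonneg; intros; apply Rabs_pos).
assert (Hkey : forall v, sq K v * sq K v <= (mu * sq K v - form K A v) * (G * sq K v)).
{ intros v. set (w := fun k => rsum K (fun j => v j * c j k)).
  assert (Hw : forall i, (i < K)%nat -> mvmul K B w i = v i).
  { intros i Hi. unfold mvmul, w.
    rewrite (rsum_ext K _ (fun k => rsum K (fun j => v j * (B i k * c j k)))).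
    2:{ intros; rewrite <- rsum_scal; apply rsum_ext; intros; ring. }
    rewrite rsum_swap. rewrite (rsum_ext K _ (fun j => v j * ev j i)).
    - rewrite (rsum_single K _ i Hi). unfold ev; rewrite Nat.eqb_refl; ring.
      intros k Hk Hne. unfold ev. apply Nat.eqb_neq in Hne. rewrite Nat.eqb_sym, Hne. ring.
    - intros j Hj. rewrite rsum_scal. rewrite <- (Hc j i Hi). auto. }
  assert (E1 : bil K B v w = sq K v).
  { unfold bil, sq. apply rsum_ext; intros; rewrite Hw; auto. }
  assert (E2 : bil K B v v = mu * sq K v - form K A v).
  { unfold bil, form, sq. rewrite <- rsum_scal. unfold bil. rewrite <- rsum_minus. apply rsum_ext; intros; rewrite HBv; auto; ring. }
  assert (E3 : bil K B w w <= G * sq K v).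
  { unfold bil. rewrite (rsum_ext K _ (fun i => rsum K (fun j => c j i * (v j * v i)))).
    2:{ intros i Hi. rewrite Hw by auto. unfold w. rewrite <- rsum_scalr. apply rsum_ext; intros; ring. }
    rewrite rsum_swap. unfold G. rewrite <- rsum_scalr. apply rsum_le; intros j Hj.
    rewrite <- rsum_scalr. apply rsum_le; intros i Hi.
    eapply Rle_trans; [apply Rle_abs|]. rewrite Rabs_mult. apply Rmult_le_compat_l; [apply Rabs_pos|]. apply sq_prod; auto. }
  assert (H := bil_CS K B v w HBsym HBpos). rewrite E1, E2 in H.
  assert (0 <= mu * sq K v - form K A v) by (rewrite <- E2; auto).
  eapply Rle_trans; [exact H|]. apply Rmult_le_compat_l; auto. }
set (eps := / (G + 1)).
assert (Heps : 0 < eps) by (unfold eps; apply Rinv_0_lt_compat; lra).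
assert (Hnot : ~ is_upper_bound S (mu - eps)).
{ intros H. assert (H1 := Hlub _ H). lra. }
apply Hnot. intros r Hr. apply Rnot_lt_le. intros Hlt. apply Hnot.
exfalso. destruct Hr as [v [Hv ->]].
assert (H1 : mu * sq K v - form K A v < eps * sq K v).
{ apply Rmult_lt_compat_r with (r := sq K v) in Hlt; auto. unfold Rdiv in Hlt. rewrite Rmult_assoc, Rinv_l in Hlt by lra. lra. }
assert (H2 := Hkey v). assert (H3 := Hup v).
assert (HGe : G * eps < 1).
{ unfold eps. apply Rmult_lt_reg_r with (G + 1); [lra|]. rewrite Rmult_assoc, Rinv_l by lra. lra. }
assert (H4 : sq K v * sq K v <= (eps * sq K v) * (G * sq K v)).
{ eapply Rle_trans; [exact H2|]. apply Rmult_le_compat_r; [nra|]. lra. }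
set (s := sq K v) in *. clearbody s.
assert (Hss : 0 < (1 - G * eps) * (s * s)) by (apply Rmult_lt_0_compat; [lra|apply Rmult_lt_0_compat; lra]).
replace (eps * s * (G * s)) with (G * eps * (s * s)) in H4 by ring. lra.
Qed.


Definition Lyap K (A X : mat) : mat := fun r c => mmul K A X r c + mmul K X A r c.

Lemma Lyap_add K A X Y : Lyap K A (madd X Y) = madd (Lyap K A X) (Lyap K A Y).
Proof.
apply functional_extensionality; intro r; apply functional_extensionality; intro c.
unfold Lyap, madd, mmul. rewrite (rsum_ext K (fun k => A r k * (X k c + Y k c)) (fun k => A r k * X k c + A r k * Y k c)) by (intros; ring).
rewrite (rsum_ext K (fun k => (X r k + Y r k) * A k c) (fun k => X r k * A k c + Y r k * A k c)) by (intros; ring).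
rewrite !rsum_plus. ring.
Qed.

Lemma Lyap_sc K A l X : Lyap K A (msc l X) = msc l (Lyap K A X).
Proof.
apply functional_extensionality; intro r; apply functional_extensionality; intro c.
unfold Lyap, msc, mmul. rewrite (rsum_ext K (fun k => A r k * (l * X k c)) (fun k => l * (A r k * X k c))) by (intros; ring).
rewrite (rsum_ext K (fun k => (l * X r k) * A k c) (fun k => l * (X r k * A k c))) by (intros; ring).
rewrite !rsum_scal. ring.
Qed.

Definition colm (X : mat) (c : nat) : vect := fun r => X r c.
Definition rowm (X : mat) (r : nat) : vect := fun c => X r c.

Lemma ip_Lyap K A X Y : symmetric K A ->
  ip K X (Lyap K A Y) = rsum K (fun c => bil K A (colm X c) (colm Y c)) + rsum K (fun r => bil K A (rowm X r) (rowm Y r)).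
Proof.
intros HA. unfold ip, Lyap.
rewrite (rsum_ext K _ (fun r => rsum K (fun c => X r c * mmul K A Y r c) + rsum K (fun c => X r c * mmul K Y A r c))).
2:{ intros; rewrite <- rsum_plus; apply rsum_ext; intros; ring. }
rewrite rsum_plus. f_equal.
- rewrite rsum_swap. apply rsum_ext; intros c Hc. unfold bil, colm, mvmul, mmul. auto.
- apply rsum_ext; intros r Hr. unfold bil, rowm, mvmul, mmul. apply rsum_ext; intros c Hc.
  f_equal. apply rsum_ext; intros k Hk. rewrite (HA c k) by auto. ring.
Qed.

Lemma Lyap_sym K A X Y : symmetric K A -> ip K X (Lyap K A Y) = ip K (Lyap K A X) Y.
Proof.
intros HA. rewrite (ip_sym K (Lyap K A X) Y), !ip_Lyap by auto.
f_equal; apply rsum_ext; intros; apply bil_sym; auto.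
Qed.

Lemma ip_cols K X : rsum K (fun c => sq K (colm X c)) = ip K X X.
Proof. unfold ip, sq, colm. rewrite rsum_swap. auto. Qed.
Lemma ip_rows K X : rsum K (fun r => sq K (rowm X r)) = ip K X X.
Proof. unfold ip, sq, rowm. auto. Qed.

Lemma Lyap_form K A a b X : symmetric K A -> (forall v, a * sq K v <= form K A v <= b * sq K v) ->
  2 * a * ip K X X <= ip K X (Lyap K A X) <= 2 * b * ip K X X.
Proof.
intros HA Hr. rewrite ip_Lyap by auto. assert (E1 := ip_cols K X). assert (E2 := ip_rows K X).
assert (H1 : rsum K (fun c => a * sq K (colm X c)) <= rsum K (fun c => bil K A (colm X c) (colm X c)) <= rsum K (fun c => b * sq K (colm X c))).
{ split; apply rsum_le; intros; apply Hr. }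
assert (H2 : rsum K (fun c => a * sq K (rowm X c)) <= rsum K (fun c => bil K A (rowm X c) (rowm X c)) <= rsum K (fun c => b * sq K (rowm X c))).
{ split; apply rsum_le; intros; apply Hr. }
rewrite !rsum_scal in H1, H2. rewrite E1 in H1. rewrite E2 in H2. lra.
Qed.

Lemma ray_bounds K A a b : (1 <= K)%nat -> symmetric K A -> is_lambda_min K A a -> is_lambda_max K A b ->
  forall v, a * sq K v <= form K A v <= b * sq K v.
Proof.
intros HK HA [_ Hmin] [_ Hmax] v. split.
- set (A' := fun i j => - A i j).
  assert (HA' : symmetric K A') by (intros i j Hi Hj; unfold A'; rewrite HA; auto).
  destruct (ray_upper K A' HK HA') as [mu [[w [Hw Hev]] Hup]].
  assert (Hm : forall u i, mvmul K A' u i = - mvmul K A u i).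
  { intros u i. unfold mvmul, A'. rewrite (rsum_ext K _ (fun k => -1 * (A i k * u k))) by (intros; ring). rewrite rsum_scal; ring. }
  assert (He : is_eigenvalue K A (- mu)).
  { exists w. split; auto. intros i Hi. specialize (Hev i Hi). rewrite Hm in Hev. lra. }
  assert (H1 := Hmin _ He). assert (H2 := Hup v).
  assert (form K A' v = - form K A v).
  { unfold form, bil. rewrite (rsum_ext K _ (fun i => -1 * (v i * mvmul K A v i))). rewrite rsum_scal; ring.
    intros; rewrite Hm; ring. }
  assert (H3 := sq_nonneg K v). nra.
- destruct (ray_upper K A HK HA) as [mu [He Hup]].
  assert (H1 := Hmax _ He). assert (H2 := Hup v). assert (H3 := sq_nonneg K v). nra.
Qed.

Lemma lin_rep n (F : vect -> vect) :
  (forall x y, F (fun t => x t + y t) = (fun s => F x s + F y s)) ->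
  (forall l x, F (fun t => l * x t) = (fun s => l * F x s)) ->
  (forall x y, (forall t, (t < n)%nat -> x t = y t) -> forall s, (s < n)%nat -> F x s = F y s) ->
  forall v s, (s < n)%nat -> F v s = rsum n (fun t => F (ev t) s * v t).
Proof.
intros Fadd Fsc Fbox v s Hs.
set (vs := fun m t => rsum m (fun j => v j * ev j t)).
assert (Hm : forall m, F (vs m) s = rsum m (fun t => F (ev t) s * v t)).
{ induction m.
  - simpl. unfold vs; simpl.
    assert (E : (fun _ : nat => 0) = (fun t : nat => 0 * (fun _ => 0) t)) by (apply functional_extensionality; intros; ring).
    change (F (fun _ : nat => 0) s = 0). rewrite E, Fsc. ring.
  - change (vs (S m)) with (fun t => vs m t + (fun t => v m * ev m t) t).
    rewrite Fadd. change (fun t => v m * ev m t) with (fun t => v m * (ev m) t). rewrite Fsc. simpl. rewrite IHm. ring. }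
rewrite (Fbox v (vs n)); auto.
intros t Ht. unfold vs. symmetry. rewrite (rsum_single n _ t Ht).
- unfold ev; rewrite Nat.eqb_refl; ring.
- intros k Hk Hne. unfold ev. apply Nat.eqb_neq in Hne. rewrite Nat.eqb_sym, Hne. ring.
Qed.

Definition unv K (v : vect) : mat := fun r c => v (c * K + r)%nat.
Definition FV K A (v : vect) : vect := fun s => Lyap K A (unv K v) (s mod K)%nat (s / K)%nat.

Lemma idx_mod K r c : (r < K)%nat -> ((c * K + r) mod K)%nat = r.
Proof. intros H. symmetry. apply (Nat.mod_unique _ _ c); auto. lia. Qed.
Lemma idx_div K r c : (r < K)%nat -> ((c * K + r) / K)%nat = c.
Proof. intros H. symmetry. apply (Nat.div_unique _ _ _ r); auto. lia. Qed.
Lemma idx_lt K r c : (r < K)%nat -> (c < K)%nat -> (c * K + r < K * K)%nat.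
Proof. intros; nia. Qed.
Lemma div_lt K s : (s < K * K)%nat -> (s / K < K)%nat.
Proof. intros H. apply Nat.Div0.div_lt_upper_bound. lia. Qed.
Lemma mod_lt K s : (s < K * K)%nat -> (s mod K < K)%nat.
Proof. intros H. apply Nat.mod_upper_bound. intros ->. lia. Qed.
Lemma s_decomp K s : (s < K * K)%nat -> s = ((s / K) * K + s mod K)%nat.
Proof. intros H. rewrite Nat.mul_comm. apply Nat.div_mod. intros ->. lia. Qed.

Lemma Lyap_inj K A a b : symmetric K A -> (forall v, a * sq K v <= form K A v <= b * sq K v) -> b < 0 ->
  forall X, (forall r c, (r < K)%nat -> (c < K)%nat -> Lyap K A X r c = 0) ->
  forall r c, (r < K)%nat -> (c < K)%nat -> X r c = 0.
Proof.
intros HA Hr Hb X HX. apply ip_zero_entries.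
assert (H := Lyap_form K A a b X HA Hr).
assert (E : ip K X (Lyap K A X) = ip K X mzero).
{ apply ip_ext; intros r c Hr' Hc'; split; auto. }
rewrite E, ip_zeror in H. assert (H0 := ip_nonneg K X). nra.
Qed.

Lemma Lyap_exists K A a b : symmetric K A -> (forall v, a * sq K v <= form K A v <= b * sq K v) -> b < 0 ->
  forall C, exists X, solves_lyap K A X C.
Proof.
intros HA Hr Hb C.
assert (Fadd : forall x y, FV K A (fun t => x t + y t) = (fun s => FV K A x s + FV K A y s)).
{ intros x y. unfold FV. change (unv K (fun t => x t + y t)) with (madd (unv K x) (unv K y)). rewrite Lyap_add. auto. }
assert (Fsc : forall l x, FV K A (fun t => l * x t) = (fun s => l * FV K A x s)).
{ intros l x. unfold FV. change (unv K (fun t => l * x t)) with (msc l (unv K x)). rewrite Lyap_sc. auto. }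
assert (Fbox : forall x y, (forall t, (t < K * K)%nat -> x t = y t) -> forall s, (s < K * K)%nat -> FV K A x s = FV K A y s).
{ intros x y Hxy s Hs. unfold FV, Lyap, mmul, unv.
  assert (H1 := div_lt K s Hs). assert (H2 := mod_lt K s Hs).
  f_equal; apply rsum_ext; intros k Hk; rewrite Hxy; try reflexivity; apply idx_lt; auto. }
assert (Hrep := lin_rep (K * K) (FV K A) Fadd Fsc Fbox).
assert (HFV : forall v r c, (r < K)%nat -> (c < K)%nat -> FV K A v (c * K + r)%nat = Lyap K A (unv K v) r c).
{ intros v r c Hr' Hc'. unfold FV. rewrite idx_mod, idx_div; auto. }
set (N := fun s t => FV K A (ev t) s).
assert (Hinj : forall v : vect, (forall i, (i < K * K)%nat -> rsum (K * K) (fun k => Rmult (N i k) (v k)) = R0) ->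
   forall i, (i < K * K)%nat -> v i = R0).
{ intros v Hv t Ht.
  assert (Hz : forall r c, (r < K)%nat -> (c < K)%nat -> unv K v r c = 0).
  { apply (Lyap_inj K A a b HA Hr Hb). intros r c Hr' Hc'. rewrite <- HFV by auto.
    rewrite Hrep by (apply idx_lt; auto). apply Hv. apply idx_lt; auto. }
  rewrite (s_decomp K t Ht). apply (Hz (t mod K) (t / K)%nat); [apply mod_lt|apply div_lt]; auto. }
destruct (Bridge.inj_surj (K * K) N Hinj (fun s => C (s mod K)%nat (s / K)%nat)) as [v Hv].
exists (unv K v). intros r c Hr' Hc'. change (Lyap K A (unv K v) r c = C r c). rewrite <- HFV by auto. rewrite Hrep by (apply idx_lt; auto).
unfold N in Hv. rewrite Hv by (apply idx_lt; auto). rewrite idx_mod, idx_div; auto.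
Qed.


Ltac mext := apply functional_extensionality; intro; apply functional_extensionality; intro.

Lemma natdist_tri x y z : (natdist x z <= natdist x y + natdist y z)%nat.
Proof. unfold natdist; lia. Qed.
Lemma natdist_sym x y : natdist x y = natdist y x.
Proof. unfold natdist; lia. Qed.
Lemma natdist_row K c r k : natdist (c * K + r) (c * K + k) = natdist r k.
Proof. unfold natdist; lia. Qed.
Lemma natdist_col K c k r m' : (natdist c k <= m')%nat -> (natdist (c * K + r) (k * K + r) <= K * m')%nat.
Proof.
intros H. unfold natdist in *. destruct (Nat.le_ge_cases c k) as [Hle|Hle].
- replace k with (c + (k - c))%nat in * by lia. set (e := (k - c)%nat) in *. clearbody e.
  rewrite Nat.mul_add_distr_r. assert (e * K <= m' * K)%nat by (apply Nat.mul_le_mono_r; lia). lia.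
- replace c with (k + (c - k))%nat in * by lia. set (e := (c - k)%nat) in *. clearbody e.
  rewrite Nat.mul_add_distr_r. assert (e * K <= m' * K)%nat by (apply Nat.mul_le_mono_r; lia). lia.
Qed.

Section Cheb.
Variables (K m' : nat) (A : mat) (a b : R) (i j : nat) (p : R) (X : mat).
Hypothesis HK : (1 <= K)%nat.
Hypothesis Hm : (1 <= m')%nat.
Hypothesis HA : symmetric K A.
Hypothesis Hband : forall r k, (r < K)%nat -> (k < K)%nat -> A r k <> 0 -> (natdist r k <= m')%nat.
Hypothesis Hray : forall v, a * sq K v <= form K A v <= b * sq K v.
Hypothesis Hab : a < b.
Hypothesis Hb : b < 0.
Hypothesis Hi : (i < K)%nat.
Hypothesis Hj : (j < K)%nat.
Hypothesis HX : solves_lyap K A X (elem_rhs i j p).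

Let h := (K * m')%nat.
Let dd := b - a.
Let c0 := - (a + b).
Let aC := c0 / dd.
Let C := elem_rhs i j p.
Definition Lop (Y : mat) : mat := msc (/ (b - a)) (madd (msc (- (a + b)) Y) (Lyap K A Y)).

Lemma dd_pos : 0 < dd.
Proof. unfold dd; lra. Qed.

Lemma Lop_add Y Z : Lop (madd Y Z) = madd (Lop Y) (Lop Z).
Proof. unfold Lop. rewrite Lyap_add. mext. unfold msc, madd. ring. Qed.
Lemma Lop_sc l Y : Lop (msc l Y) = msc l (Lop Y).
Proof. unfold Lop. rewrite Lyap_sc. mext. unfold msc, madd. ring. Qed.
Lemma Lop_sub Y Z : Lop (msub Y Z) = msub (Lop Y) (Lop Z).
Proof. apply Lsub; [apply Lop_add|apply Lop_sc]. Qed.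
Lemma Lop_sym Y Z : ip K Y (Lop Z) = ip K (Lop Y) Z.
Proof. unfold Lop. rewrite ip_scl, ip_scr, ip_addl, ip_addr, ip_scl, ip_scr, Lyap_sym; auto. Qed.
Lemma Lop_form Z : Rabs (ip K Z (Lop Z)) <= ip K Z Z.
Proof.
unfold Lop. rewrite ip_scr, ip_addr, ip_scr.
assert (H := Lyap_form K A a b Z HA Hray). assert (H0 := ip_nonneg K Z).
assert (Hd : 0 < b - a) by lra.
apply Rabs_le. split.
- apply Rmult_le_reg_l with (b - a); auto. rewrite <- Rmult_assoc, Rinv_r by lra. nra.
- apply Rmult_le_reg_l with (b - a); auto. rewrite <- Rmult_assoc, Rinv_r by lra. nra.
Qed.

Lemma Lop_X r c : (r < K)%nat -> (c < K)%nat -> Lop X r c = aC * X r c + C r c / dd.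
Proof.
intros Hr Hc. unfold Lop, msc, madd. unfold Lyap. rewrite (HX r c Hr Hc). unfold aC, c0, dd, C. field. lra.
Qed.

Definition dist r c := natdist (phi K i j) (phi K r c).
Definition inS (k : nat) (Y : mat) := forall r c, (r < K)%nat -> (c < K)%nat -> (dist r c + h > k * h)%nat -> Y r c = 0.
Definition aff (k : nat) (al : R) (V : mat) := inS k (msub V (msc al X)).

Lemma inS_mono k k' Y : (k <= k')%nat -> inS k Y -> inS k' Y.
Proof. intros Hk H r c Hr Hc Hd. apply H; auto. assert (k * h <= k' * h)%nat by (apply Nat.mul_le_mono_r; auto). lia. Qed.
Lemma inS_add k Y Z : inS k Y -> inS k Z -> inS k (madd Y Z).
Proof. intros H1 H2 r c Hr Hc Hd. unfold madd. rewrite H1, H2; auto; ring. Qed.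
Lemma inS_sub k Y Z : inS k Y -> inS k Z -> inS k (msub Y Z).
Proof. intros H1 H2 r c Hr Hc Hd. unfold msub. rewrite H1, H2; auto; ring. Qed.
Lemma inS_sc k l Y : inS k Y -> inS k (msc l Y).
Proof. intros H1 r c Hr Hc Hd. unfold msc. rewrite H1; auto; ring. Qed.

Lemma inS_C : inS 1 C.
Proof.
intros r c Hr Hc Hd. unfold C, elem_rhs.
destruct (Nat.eqb r i) eqn:E1; destruct (Nat.eqb c j) eqn:E2; simpl; auto.
apply Nat.eqb_eq in E1; apply Nat.eqb_eq in E2; subst. unfold dist, natdist in Hd. lia.
Qed.

Lemma inS_Lop k Y : inS k Y -> inS (S k) (Lop Y).
Proof.
intros HY r c Hr Hc Hd. unfold Lop, msc, madd, Lyap, mmul.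
assert (Hd' : (dist r c > k * h)%nat) by (simpl in Hd; lia).
rewrite HY; auto; [|lia].
rewrite (rsum_zero K (fun k0 => A r k0 * Y k0 c)).
rewrite (rsum_zero K (fun k0 => Y r k0 * A k0 c)). ring.
- intros k0 Hk0. destruct (Req_dec (A k0 c) 0) as [->|Hne]; [ring|].
  assert (Hn := Hband k0 c Hk0 Hc Hne). rewrite natdist_sym in Hn.
  rewrite HY; auto; [ring|]. unfold dist, phi in *.
  assert (H1 := natdist_col K c k0 r m' Hn).
  assert (H2 := natdist_tri (j * K + i) (k0 * K + r) (c * K + r)). rewrite (natdist_sym (k0 * K + r)) in H2.
  unfold h in *. lia.
- intros k0 Hk0. destruct (Req_dec (A r k0) 0) as [->|Hne]; [ring|].
  assert (Hn := Hband r k0 Hr Hk0 Hne).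
  rewrite HY; auto; [ring|]. unfold dist, phi in *.
  assert (H1 := natdist_row K c r k0).
  assert (H2 := natdist_tri (j * K + i) (c * K + k0) (c * K + r)). rewrite (natdist_sym (c * K + k0)) in H2.
  assert (m' <= h)%nat by (unfold h; nia).
  lia.
Qed.

Lemma aff_Lop k al V : aff k al V -> aff (S k) (al * aC) (Lop V).
Proof.
intros H r c Hr Hc Hd.
assert (E : msub (Lop V) (msc (al * aC) X) r c = Lop (msub V (msc al X)) r c + al * (Lop X r c - aC * X r c)).
{ rewrite Lop_sub, Lop_sc. unfold msub, msc. ring. }
rewrite E, Lop_X by auto. rewrite (inS_Lop k _ H r c Hr Hc Hd).
rewrite (inS_mono 1 (S k) C ltac:(lia) inS_C r c Hr Hc Hd). field. apply Rgt_not_eq, dd_pos.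
Qed.

Lemma aff_add k al be V W : aff k al V -> aff k be W -> aff k (al + be) (madd V W).
Proof. intros H1 H2 r c Hr Hc Hd. unfold msub, madd, msc. assert (E1 := H1 r c Hr Hc Hd). assert (E2 := H2 r c Hr Hc Hd). unfold msub, msc in E1, E2. lra. Qed.
Lemma aff_sub k al be V W : aff k al V -> aff k be W -> aff k (al - be) (msub V W).
Proof. intros H1 H2 r c Hr Hc Hd. unfold msub, madd, msc. assert (E1 := H1 r c Hr Hc Hd). assert (E2 := H2 r c Hr Hc Hd). unfold msub, msc in E1, E2. lra. Qed.
Lemma aff_sc k l al V : aff k al V -> aff k (l * al) (msc l V).
Proof. intros H1 r c Hr Hc Hd. unfold msub, msc. assert (E1 := H1 r c Hr Hc Hd). unfold msub, msc in E1.
  replace (l * V r c - l * al * X r c) with (l * (V r c - al * X r c)) by ring. rewrite E1; ring. Qed.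
Lemma aff_mono k k' al V : (k <= k')%nat -> aff k al V -> aff k' al V.
Proof. intros; eapply inS_mono; eauto. Qed.

Lemma aff_D k be V : aff k be V -> aff (S (S k)) (be - be * aC * aC) (D Lop V).
Proof.
intros H. unfold D. apply aff_sub.
- eapply aff_mono; [|exact H]; lia.
- replace (be * aC * aC) with ((be * aC) * aC) by ring. apply aff_Lop, aff_Lop, H.
Qed.

Definition Rs (q : R * R) : R * R := (fst q * aC - snd q * (1 - aC * aC), fst q + snd q * aC).
Definition ww n := Nat.iter n (Rot Lop) (w0 Lop X).
Definition sc n := Nat.iter n Rs (aC, -1).

Lemma ww2 : ww 2 = (Lop X, X).
Proof. unfold ww. simpl. rewrite Rot_w0, Rot_X0; auto; apply Lop_sc. Qed.
Lemma ww1 : ww 1 = (X, mzero).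
Proof. unfold ww. simpl. rewrite Rot_w0; auto; apply Lop_sc. Qed.

Lemma aff_X : aff 0 1 X.
Proof. intros r c Hr Hc Hd. unfold msub, msc. ring. Qed.
Lemma aff_LX : aff 1 aC (Lop X).
Proof.
intros r c Hr Hc Hd. unfold msub, msc. rewrite Lop_X by auto. rewrite (inS_C r c Hr Hc Hd). unfold Rdiv; ring.
Qed.

Lemma inv_ww jj : aff (S jj) (fst (sc (jj + 2))) (fst (ww (jj + 2))) /\ aff jj (snd (sc (jj + 2))) (snd (ww (jj + 2))).
Proof.
induction jj.
- simpl plus. rewrite ww2. simpl. split.
  + replace ((aC * aC - -1 * (1 - aC * aC)) * aC - (aC + -1 * aC) * (1 - aC * aC)) with aC by ring. apply aff_LX.
  + replace (aC * aC - -1 * (1 - aC * aC) + (aC + -1 * aC) * aC) with 1 by ring. apply aff_X.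
- destruct IHjj as [H1 H2].
  replace (S jj + 2)%nat with (S (jj + 2)) by lia.
  unfold ww, sc. simpl Nat.iter. fold (ww (jj + 2)). fold (sc (jj + 2)).
  unfold Rot, Rs. simpl. split.
  + apply aff_sub. apply aff_Lop, H1.
    replace (snd (sc (jj + 2)) * (1 - aC * aC)) with (snd (sc (jj + 2)) - snd (sc (jj + 2)) * aC * aC) by ring.
    apply aff_D, H2.
  + apply aff_add. eapply aff_mono; [|exact H1]; lia.
    replace (snd (sc (jj + 2)) * aC) with (snd (sc (jj + 2)) * aC) by ring.
    eapply aff_mono; [|apply aff_Lop, H2]; lia.
Qed.

Lemma aff_eq k al be V : al = be -> aff k al V -> aff k be V.
Proof. intros ->; auto. Qed.

Lemma aff_W n rho :
  aff (S n) (fst (sc (S (S n))) + (-2 * rho) * fst (sc (S n)) + (rho * rho) * fst (sc n))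
    (madd (madd (fst (ww (S (S n)))) (msc (-2 * rho) (fst (ww (S n))))) (msc (rho * rho) (fst (ww n)))).
Proof.
apply aff_add; [apply aff_add|]; [| apply aff_sc | apply aff_sc].
- destruct (inv_ww n) as [H _]. replace (n + 2)%nat with (S (S n)) in H by lia. exact H.
- destruct n as [|n'].
  + rewrite ww1. simpl. eapply aff_mono; [|apply (aff_eq 0 1)]; [lia| |apply aff_X]. ring.
  + destruct (inv_ww n') as [H _]. replace (n' + 2)%nat with (S (S n')) in H by lia.
    eapply aff_mono; [|exact H]; lia.
- destruct n as [|[|n'']].
  + unfold ww, sc. simpl. apply aff_LX.
  + rewrite ww1. simpl. eapply aff_mono; [|apply (aff_eq 0 1)]; [lia| |apply aff_X]. ring.
  + destruct (inv_ww n'') as [H _]. replace (n'' + 2)%nat with (S (S n'')) in H by lia.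
    eapply aff_mono; [|exact H]; lia.
Qed.

Section Scal.
Variable rho : R.
Hypothesis Hrho : 0 < rho < 1.
Hypothesis HaC : aC = (1 + rho * rho) / (2 * rho).

Lemma sc_closed jj : 2 * rho ^ jj * fst (sc (S jj)) = 1 + rho ^ jj * rho ^ jj /\
   (1 - rho * rho) * rho ^ jj * snd (sc (S jj)) = rho * (1 - rho ^ jj * rho ^ jj).
Proof.
induction jj.
- unfold sc; simpl. split; ring.
- destruct IHjj as [H1 H2].
  assert (Ht : 0 < rho ^ jj) by (apply pow_lt; lra).
  set (t := rho ^ jj) in *.
  assert (EF : fst (sc (S jj)) = (1 + t * t) / (2 * t)).
  { apply Rmult_eq_reg_l with (2 * t); [|lra]. rewrite H1. field. lra. }
  assert (EG : snd (sc (S jj)) = rho * (1 - t * t) / ((1 - rho * rho) * t)).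
  { assert (0 < 1 - rho * rho) by nra.
    apply Rmult_eq_reg_l with ((1 - rho * rho) * t); [|nra]. rewrite H2. field. split; lra. }
  assert (Es : sc (S (S jj)) = Rs (sc (S jj))) by reflexivity. rewrite Es. unfold Rs. cbn [fst snd].
  replace (rho ^ S jj) with (rho * t) by (simpl; auto).
  rewrite EF, EG, HaC.
  assert (0 < 1 - rho * rho) by nra.
  split; field; repeat split; lra.
Qed.

Lemma Qa_closed n : (fst (sc (S (S n))) + (-2 * rho) * fst (sc (S n)) + (rho * rho) * fst (sc n)) * rho ^ (S n)
   = (1 - rho * rho) * (1 - rho * rho) / 2.
Proof.
assert (0 < 1 - rho * rho) by nra.
destruct n as [|n'].
- destruct (sc_closed 0) as [H0 _]. destruct (sc_closed 1) as [H1 _].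
  assert (E0 : fst (sc 0) = aC) by auto.
  rewrite !pow_O in H0. rewrite !pow_1 in H1. rewrite E0, HaC.
  assert (E1 : fst (sc 1) = 1) by lra.
  assert (E2 : fst (sc 2) = (1 + rho * rho) / (2 * rho)).
  { apply Rmult_eq_reg_l with (2 * rho); [|lra]. rewrite H1. field. lra. }
  rewrite E1, E2. simpl. field. lra.
- destruct (sc_closed n') as [H0 _]. destruct (sc_closed (S n')) as [H1 _]. destruct (sc_closed (S (S n'))) as [H2 _].
  assert (Ht : 0 < rho ^ n') by (apply pow_lt; lra).
  simpl pow in H1, H2 |- *. set (t := rho ^ n') in *.
  assert (E0 : fst (sc (S n')) = (1 + t * t) / (2 * t)) by (apply Rmult_eq_reg_l with (2 * t); [rewrite H0; field|]; lra).
  assert (E1 : fst (sc (S (S n'))) = (1 + rho * t * (rho * t)) / (2 * (rho * t))).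
  { apply Rmult_eq_reg_l with (2 * (rho * t)); [|apply Rgt_not_eq; repeat apply Rmult_lt_0_compat; lra]. rewrite H1. field. split; lra. }
  assert (E2 : fst (sc (S (S (S n')))) = (1 + rho * (rho * t) * (rho * (rho * t))) / (2 * (rho * (rho * t)))).
  { apply Rmult_eq_reg_l with (2 * (rho * (rho * t))); [|apply Rgt_not_eq; repeat apply Rmult_lt_0_compat; lra]. rewrite H2. field. split; lra. }
  rewrite E0, E1, E2. field. split; lra.
Qed.
End Scal.

Lemma ip_elem Y : ip K Y (elem_rhs i j p) = Y i j * p.
Proof.
unfold ip. rewrite (rsum_single K _ i Hi).
- rewrite (rsum_single K _ j Hj). unfold elem_rhs. rewrite !Nat.eqb_refl. simpl. auto.
  intros k Hk Hne. unfold elem_rhs. rewrite Nat.eqb_refl. apply Nat.eqb_neq in Hne. rewrite Hne. simpl. ring.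
- intros k Hk Hne. apply rsum_zero. intros l Hl. unfold elem_rhs. apply Nat.eqb_neq in Hne. rewrite Hne. simpl. ring.
Qed.

Lemma cheb_entry rho : 0 < rho < 1 -> aC = (1 + rho * rho) / (2 * rho) ->
  forall n r c, (r < K)%nat -> (c < K)%nat -> (dist r c > n * h)%nat ->
  Rabs (X r c) <= 4 * rho ^ (S (S n)) * Rabs p / (dd * ((1 - rho * rho) * (1 - rho * rho))).
Proof.
intros Hrho HaC n r c Hr Hc Hd.
assert (Hcn := cheb_norm K Lop Lop_add Lop_sc Lop_sym rho X n Lop_form). simpl in Hcn.
set (W := madd (madd (fst (ww (S (S n)))) (msc (-2 * rho) (fst (ww (S n))))) (msc (rho * rho) (fst (ww n)))).
assert (HW : ip K W W <= ip K (msub (msc (1 + rho * rho) X) (msc (2 * rho) (Lop X))) (msub (msc (1 + rho * rho) X) (msc (2 * rho) (Lop X)))).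
{ unfold W, ww. exact Hcn. }
set (Qa := fst (sc (S (S n))) + (-2 * rho) * fst (sc (S n)) + (rho * rho) * fst (sc n)).
assert (HQ := Qa_closed rho Hrho HaC n). fold Qa in HQ.
assert (Hpn : 0 < rho ^ S n) by (apply pow_lt; lra).
assert (H1r : 0 < 1 - rho * rho) by nra.
assert (HQp : 0 < Qa).
{ apply Rmult_lt_reg_r with (rho ^ S n); auto. rewrite HQ. rewrite Rmult_0_l. apply Rmult_lt_0_compat; [nra|lra]. }
assert (HWrc : W r c = Qa * X r c).
{ assert (H := aff_W n rho r c Hr Hc ltac:(simpl; lia)). change (msub ?V (msc ?l X) r c) with (V r c - l * X r c) in H. fold W in H. fold Qa in H. lra. }
assert (HG : ip K (msub (msc (1 + rho * rho) X) (msc (2 * rho) (Lop X))) (msub (msc (1 + rho * rho) X) (msc (2 * rho) (Lop X)))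
   = ip K (msc (- 2 * rho / dd) C) (msc (- 2 * rho / dd) C)).
{ apply ip_ext. intros r' c' Hr' Hc'. unfold msub, msc. rewrite Lop_X by auto. rewrite HaC.
  assert (dd <> 0) by (apply Rgt_not_eq, dd_pos). split; field; split; lra. }
rewrite HG, ip_scl, ip_scr in HW. unfold C in HW. rewrite ip_elem in HW. unfold elem_rhs in HW. rewrite !Nat.eqb_refl in HW. simpl in HW.
assert (He := ip_entry K W r c Hr Hc). rewrite HWrc in He.
assert (Hsq : (Qa * X r c) * (Qa * X r c) <= (2 * rho * Rabs p / dd) * (2 * rho * Rabs p / dd)).
{ eapply Rle_trans; [exact He|]. eapply Rle_trans; [exact HW|]. right.
  assert (Ep : p * p = Rabs p * Rabs p) by (rewrite <- Rabs_mult; symmetry; apply Rabs_right; apply Rle_ge, sqr_ge0).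
  rewrite Ep. field. apply Rgt_not_eq, dd_pos. }
assert (Hab' : Rabs (Qa * X r c) <= Rabs (2 * rho * Rabs p / dd)) by (apply Rsqr_le_abs_0; unfold Rsqr; lra).
rewrite Rabs_mult, (Rabs_right Qa) in Hab' by lra.
rewrite (Rabs_right (2 * rho * Rabs p / dd)) in Hab'.
2:{ apply Rle_ge. unfold Rdiv. apply Rmult_le_pos; [apply Rmult_le_pos; [lra|apply Rabs_pos]|]. apply Rlt_le, Rinv_0_lt_compat, dd_pos. }
assert (HQv : Qa = (1 - rho * rho) * (1 - rho * rho) / 2 / rho ^ S n).
{ rewrite <- HQ. field. lra. }
assert (Hdd := dd_pos).
apply Rmult_le_reg_l with Qa; auto. eapply Rle_trans; [exact Hab'|]. right.
rewrite HQv. simpl pow. field. repeat split; try lra. apply Rgt_not_eq. apply pow_lt; lra.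
Qed.

End Cheb.


Lemma INR_natdist x y : Rabs (INR x - INR y) = INR (natdist x y).
Proof.
unfold natdist. destruct (Nat.le_ge_cases x y) as [H|H].
- replace (x - y)%nat with 0%nat by lia. rewrite Nat.add_0_l, minus_INR by auto.
  rewrite Rabs_left1; [ring|]. apply le_INR in H. lra.
- replace (y - x)%nat with 0%nat by lia. rewrite Nat.add_0_r, minus_INR by auto.
  rewrite Rabs_right; [ring|]. apply le_INR in H. lra.
Qed.

Lemma band_nat K m' A : banded K (2 * m') A -> forall r k, (r < K)%nat -> (k < K)%nat -> A r k <> 0 -> (natdist r k <= m')%nat.
Proof.
intros HB r k Hr Hk Hne. apply INR_le. rewrite <- INR_natdist.
destruct (Rle_lt_dec (Rabs (INR r - INR k)) (INR m')) as [H|H]; auto.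
exfalso. apply Hne. apply HB; auto. rewrite mult_INR. simpl INR. lra.
Qed.

Lemma b_neg K A b : neg_definite K A -> is_lambda_max K A b -> b < 0.
Proof.
intros HN [[v [Hv He]] _].
assert (H := HN v Hv).
rewrite (rsum_ext K _ (fun i => b * (v i * v i))) in H by (intros; rewrite He; auto; ring).
rewrite rsum_scal in H. destruct Hv as [i [Hi Hvi]].
assert (H1 := sq_entry K v i Hi). unfold sq in H1.
assert (0 < v i * v i) by (destruct (Rlt_or_le 0 (v i)); [nra|]; assert (v i < 0) by lra; nra).
destruct (Rlt_or_le b 0); auto. nra.
Qed.

Lemma rho1_nonneg K m a b : 0 <= rho1 K m a b.
Proof. unfold rho1. destruct (Req_EM_T (rho_base a b) 0); [lra|]. unfold Rpower. apply Rlt_le, exp_pos. Qed.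

Lemma tau1_ge K_ b : b < 0 -> / (2 * Rabs b) * K_ <= / (2 * Rabs b) * Rmax 1 K_.
Proof. intros Hb. apply Rmult_le_compat_l; [|apply Rmax_r]. apply Rlt_le, Rinv_0_lt_compat. rewrite Rabs_left; lra. Qed.

Lemma Rpower_anti q x y : 0 < q < 1 -> x <= y -> Rpower q y <= Rpower q x.
Proof.
intros Hq Hxy. unfold Rpower. assert (Hl : ln q < 0) by (rewrite <- ln_1; apply ln_increasing; lra).
destruct (Req_dec x y) as [->|Hne]; [lra|]. apply Rlt_le, exp_increasing. nra.
Qed.

Lemma Lyap_rsum K A (F : nat -> mat) r c :
  Lyap K A (fun r c => rsum K (fun i => F i r c)) r c = rsum K (fun i => Lyap K A (F i) r c).
Proof.
unfold Lyap, mmul. rewrite rsum_plus. f_equal.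
- rewrite (rsum_ext K _ (fun k => rsum K (fun i => A r k * F i k c))) by (intros; rewrite rsum_scal; auto). apply rsum_swap.
- rewrite (rsum_ext K _ (fun k => rsum K (fun i => F i r k * A k c))) by (intros; rewrite rsum_scalr; auto). apply rsum_swap.
Qed.

Section Final.
Variables (K m : nat) (A : mat) (a b : R).
Hypothesis HK : (1 <= K)%nat.
Hypothesis Hm0 : (0 < m)%nat.
Hypothesis Hev : Nat.Even m.
Hypothesis HA : symmetric K A.
Hypothesis HN : neg_definite K A.
Hypothesis HB : banded K m A.
Hypothesis Hmin : is_lambda_min K A a.
Hypothesis Hmax : is_lambda_max K A b.

Lemma Hray : forall v, a * sq K v <= form K A v <= b * sq K v.
Proof. apply ray_bounds; auto. Qed.
Lemma Hbn : b < 0.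
Proof. eapply b_neg; eauto. Qed.
Lemma Hab : a <= b.
Proof. destruct Hmin as [_ H]. destruct Hmax as [He _]. apply H; auto. Qed.

Lemma entry_bound i j p X : (i < K)%nat -> (j < K)%nat -> solves_lyap K A X (elem_rhs i j p) ->
  forall r c, (r < K)%nat -> (c < K)%nat ->
  Rabs (X r c) <= Rabs p * tau1 a b * rho1 K m a b ^ natdist (phi K i j) (phi K r c).
Proof.
intros Hi Hj HX r c Hr Hc.
assert (Hb := Hbn). assert (Hr0 := Hray).
destruct Hev as [m' Hm']. assert (Hm1 : (1 <= m')%nat) by lia.
assert (Hband := band_nat K m' A ltac:(rewrite <- Hm'; auto)).
assert (Ht0 : 0 <= tau1 a b).
{ unfold tau1. apply Rmult_le_pos; [apply Rlt_le, Rinv_0_lt_compat; rewrite Rabs_left; lra|]. eapply Rle_trans; [|apply Rmax_l]; lra. }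
assert (Htb : / (2 * - b) <= tau1 a b).
{ unfold tau1. rewrite Rabs_left by lra. rewrite <- (Rmult_1_r (/ (2 * - b))) at 1. apply Rmult_le_compat_l; [apply Rlt_le, Rinv_0_lt_compat; lra|apply Rmax_l]. }
destruct (Nat.eq_dec (natdist (phi K i j) (phi K r c)) 0) as [Hd0|Hd0].
-
  assert (Eq : phi K r c = phi K i j) by (unfold natdist in Hd0; lia).
  unfold phi in Eq.
  assert (Er : r = i) by (rewrite <- (idx_mod K r c Hr), <- (idx_mod K i j Hi), Eq; auto).
  assert (Ec : c = j) by (rewrite <- (idx_div K r c Hr), <- (idx_div K i j Hi), Eq; auto).
  subst r c. rewrite Hd0, pow_O, Rmult_1_r.
  assert (HF := Lyap_form K A a b X HA Hr0).
  assert (E : ip K X (Lyap K A X) = ip K X (elem_rhs i j p)) by (apply ip_ext; intros; split; auto; apply HX; auto).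
  rewrite E, ip_elem in HF by auto.
  assert (He := ip_entry K X i j Hi Hj).
  assert (Hxp : - (2 * b) * (X i j * X i j) <= Rabs (X i j) * Rabs p).
  { rewrite <- Rabs_mult. assert (H1 := Rle_abs (- (X i j * p))). rewrite Rabs_Ropp in H1. nra. }
  assert (Hxx : X i j * X i j = Rabs (X i j) * Rabs (X i j)) by (rewrite <- Rabs_mult, Rabs_right; auto; apply Rle_ge, sqr_ge0).
  rewrite Hxx in Hxp.
  assert (H2 : Rabs (X i j) <= Rabs p * / (2 * - b)).
  { destruct (Req_dec (Rabs (X i j)) 0) as [Hz|Hz].
    - rewrite Hz. apply Rmult_le_pos; [apply Rabs_pos|]. apply Rlt_le, Rinv_0_lt_compat; lra.
    - assert (Hp := Rabs_pos (X i j)).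
      apply Rmult_le_reg_l with (2 * - b * Rabs (X i j)); [apply Rmult_lt_0_compat; lra|].
      replace (2 * - b * Rabs (X i j) * (Rabs p * / (2 * - b))) with (Rabs (X i j) * Rabs p) by (field; lra). nra. }
  eapply Rle_trans; [exact H2|]. apply Rmult_le_compat_l; [apply Rabs_pos|auto].
- destruct (Req_dec a b) as [Heq|Hne].
  + (* a = b: X is a multiple of C *)
    assert (HXrc : X r c = 0).
    { set (NL := fun Y => msub (Lyap K A Y) (msc (2 * b) Y)).
      assert (N1 : forall Y Z, NL (madd Y Z) = madd (NL Y) (NL Z)) by (intros; unfold NL; rewrite Lyap_add; mext; unfold msub, madd, msc; ring).
      assert (N2 : forall l Y, NL (msc l Y) = msc l (NL Y)) by (intros; unfold NL; rewrite Lyap_sc; mext; unfold msub, madd, msc; ring).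
      assert (N3 : forall Y Z, ip K Y (NL Z) = ip K (NL Y) Z).
      { intros; unfold NL. rewrite ip_subr, ip_subl, ip_scr, ip_scl, Lyap_sym by auto. rewrite (ip_sym K Y Z). ring. }
      assert (N4 : forall Z, Rabs (ip K Z (NL Z)) <= 0 * ip K Z Z).
      { intros Z. unfold NL. rewrite ip_subr, ip_scr. assert (H := Lyap_form K A a b Z HA Hr0). rewrite Heq in H.
        replace (ip K Z (Lyap K A Z) - 2 * b * ip K Z Z) with 0 by lra. rewrite Rabs_R0; lra. }
      assert (H := polar K NL N1 N2 N3 0 X ltac:(lra) N4). rewrite Rmult_0_l, Rmult_0_l in H.
      assert (Hz := ip_zero_entries K (NL X) H r c Hr Hc).
      unfold NL, msub, msc in Hz. change (Lyap K A X r c) with (mmul K A X r c + mmul K X A r c) in Hz.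
      rewrite HX in Hz by auto.
      assert (Ce : elem_rhs i j p r c = 0).
      { unfold elem_rhs. destruct (Nat.eqb r i) eqn:E1; destruct (Nat.eqb c j) eqn:E2; simpl; auto.
        apply Nat.eqb_eq in E1; apply Nat.eqb_eq in E2; subst. exfalso; apply Hd0. unfold natdist; lia. }
      rewrite Ce in Hz. nra. }
    rewrite HXrc, Rabs_R0. apply Rmult_le_pos; [apply Rmult_le_pos; [apply Rabs_pos|auto]|]. apply pow_le, rho1_nonneg.
  +
    assert (Hlt : a < b) by (assert (H := Hab); lra).
    set (kap := a / b).
    assert (Hk1 : 1 < kap).
    { assert (Hib : / b < 0) by (apply Rinv_lt_0_compat; lra).
      assert (E : kap - 1 = (b - a) * (- / b)) by (unfold kap; field; lra).
      assert (0 < (b - a) * (- / b)) by (apply Rmult_lt_0_compat; lra). lra. }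
    set (s := sqrt kap).
    assert (Hs1 : 1 < s) by (unfold s; rewrite <- sqrt_1; apply sqrt_lt_1; lra).
    assert (Hss : s * s = kap) by (unfold s; apply sqrt_sqrt; lra).
    set (rho := (s - 1) / (s + 1)).
    assert (Hrho : 0 < rho < 1) by (unfold rho; split; [apply Rdiv_lt_0_compat; lra|apply Rmult_lt_reg_r with (s + 1); [lra|]; unfold Rdiv; rewrite Rmult_assoc, Rinv_l; lra]).
    assert (Ha : a = s * s * b) by (rewrite Hss; unfold kap; field; lra).
    assert (HaC : - (a + b) / (b - a) = (1 + rho * rho) / (2 * rho)).
    { unfold rho. rewrite Ha. field. repeat split; try lra. all: intros H; assert (s * s = 1) by (apply Rmult_eq_reg_r with b; lra); nra. }
    set (d := natdist (phi K i j) (phi K r c)) in *.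
    set (h := (K * m')%nat).
    assert (Hh : (1 <= h)%nat) by (unfold h; nia).
    set (n := ((d - 1) / h)%nat).
    assert (Hn1 : (h * n <= d - 1)%nat) by (unfold n; apply Nat.Div0.mul_div_le).
    assert (Hn2 : (d - 1 < h * S n)%nat).
    { unfold n. assert (H := Nat.div_mod (d - 1) h ltac:(lia)). assert (H2 := Nat.mod_upper_bound (d - 1) h ltac:(lia)). nia. }
    assert (Hce := cheb_entry K m' A a b i j p X HK Hm1 HA Hband Hr0 Hlt Hi Hj HX rho Hrho HaC n r c Hr Hc ltac:(unfold dist; fold d; nia)).
    eapply Rle_trans; [exact Hce|].
    assert (Hrb : rho_base a b = rho) by (unfold rho_base, rho, s, kap, kappa; auto).
    assert (Hr1 : rho1 K m a b = Rpower rho (2 / INR (K * m))).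
    { unfold rho1. rewrite Hrb. destruct (Req_EM_T rho 0); [lra|auto]. }
    assert (Hpw : rho ^ S n <= rho1 K m a b ^ d).
    { rewrite Hr1. rewrite <- (Rpower_pow d (Rpower rho (2 / INR (K * m)))) by (unfold Rpower; apply exp_pos). rewrite Rpower_mult.
      rewrite <- (Rpower_pow (S n) rho) by lra. apply Rpower_anti; auto.
      rewrite Hm'. replace (K * (2 * m'))%nat with (2 * h)%nat by (unfold h; lia).
      rewrite mult_INR. simpl (INR 2).
      assert (Hhp : 0 < INR h) by (apply lt_0_INR; lia).
      assert (Hdh : INR d <= INR h * INR (S n)) by (rewrite <- mult_INR; apply le_INR; lia).
      replace (2 / ((1 + 1) * INR h) * INR d) with (INR d / INR h) by (field; lra).
      apply Rmult_le_reg_r with (INR h); auto. unfold Rdiv. rewrite Rmult_assoc, Rinv_l by lra. lra. }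
    assert (Hconst : 4 * rho / ((b - a) * ((1 - rho * rho) * (1 - rho * rho))) <= tau1 a b).
    { unfold tau1. eapply Rle_trans; [|apply tau1_ge; auto]. rewrite Rabs_left by lra.
      unfold kappa. fold kap. fold s. right.
      unfold rho. rewrite Ha, <- Hss. field. repeat split; try lra. all: try (intros H; assert (s * s = 1) by (apply Rmult_eq_reg_r with b; lra); nra). }
    assert (Hr2 : rho * rho < 1) by (assert (rho * rho < rho * 1) by (apply Rmult_lt_compat_l; lra); lra).
    assert (H1r : 0 < (1 - rho * rho) * (1 - rho * rho)) by (apply Rmult_lt_0_compat; lra).
    assert (Hpn : 0 <= rho ^ S n) by (apply pow_le; lra).
    replace (4 * rho ^ S (S n) * Rabs p / ((b - a) * ((1 - rho * rho) * (1 - rho * rho))))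
      with (Rabs p * (4 * rho / ((b - a) * ((1 - rho * rho) * (1 - rho * rho)))) * rho ^ S n)
      by (simpl; field; split; lra).
    apply Rmult_le_compat; try apply Rmult_le_compat_l; try apply Rabs_pos; auto.
    apply Rmult_le_pos; [apply Rabs_pos|]. apply Rlt_le. unfold Rdiv. apply Rmult_lt_0_compat; [lra|]. apply Rinv_0_lt_compat. apply Rmult_lt_0_compat; lra.
Qed.

End Final.


Lemma Lyap_sub K A X Y r c : Lyap K A (msub X Y) r c = Lyap K A X r c - Lyap K A Y r c.
Proof.
unfold Lyap, mmul, msub.
rewrite (rsum_ext K (fun k => A r k * (X k c - Y k c)) (fun k => A r k * X k c - A r k * Y k c)) by (intros; ring).
rewrite (rsum_ext K (fun k => (X r k - Y r k) * A k c) (fun k => X r k * A k c - Y r k * A k c)) by (intros; ring).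
rewrite !rsum_minus. ring.
Qed.

Theorem theorem1 (K m : nat) (A P : mat) (a b : R) :
  (1 <= K)%nat ->
  (0 < m)%nat -> Nat.Even m ->
  symmetric K A -> neg_definite K A -> banded K m A ->
  is_lambda_min K A a -> is_lambda_max K A b ->
  (forall i j, (i < K)%nat -> (j < K)%nat ->
     forall Xij : mat, solves_lyap K A Xij (elem_rhs i j (P i j)) ->
     forall s, (s < K * K)%nat ->
       Rabs (vec_entry K Xij s)
         <= Rabs (P i j) * tau1 a b * rho1 K m a b ^ natdist (phi K i j) s)
  /\
  (forall X : mat, solves_lyap K A X P ->
     forall s, (s < K * K)%nat ->
       Rabs (vec_entry K X s)
         <= tau1 a b * rsum K (fun i => rsum K (fun j =>
              Rabs (P i j) * rho1 K m a b ^ natdist (phi K i j) s))).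
Proof.
intros HK Hm0 Hev HA HN HB Hmin Hmax.
assert (Hent : forall i j, (i < K)%nat -> (j < K)%nat ->
     forall Xij : mat, solves_lyap K A Xij (elem_rhs i j (P i j)) ->
     forall s, (s < K * K)%nat ->
       Rabs (vec_entry K Xij s)
         <= Rabs (P i j) * tau1 a b * rho1 K m a b ^ natdist (phi K i j) s).
{ intros i j Hi Hj Xij HX s Hs.
  assert (H := entry_bound K m A a b HK Hm0 Hev HA HN HB Hmin Hmax i j (P i j) Xij Hi Hj HX (s mod K) (s / K) (mod_lt K s Hs) (div_lt K s Hs)).
  unfold phi at 2 in H. rewrite <- (s_decomp K s Hs) in H. exact H. }
split; [exact Hent|].
intros X HX s Hs.
assert (Hray := ray_bounds K A a b HK HA Hmin Hmax).
assert (Hb := b_neg K A b HN Hmax).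
assert (Hex : forall i j, exists Y, solves_lyap K A Y (elem_rhs i j (P i j))).
{ intros i j. apply (Lyap_exists K A a b HA Hray Hb). }
set (Xf := fun i j => proj1_sig (constructive_indefinite_description _ (Hex i j))).
assert (HXf : forall i j, solves_lyap K A (Xf i j) (elem_rhs i j (P i j))).
{ intros i j. unfold Xf. destruct (constructive_indefinite_description _ (Hex i j)); auto. }
set (Y := fun r c => rsum K (fun i => rsum K (fun j => Xf i j r c))).
assert (HY : forall r c, (r < K)%nat -> (c < K)%nat -> Lyap K A Y r c = P r c).
{ intros r c Hr Hc. unfold Y. rewrite (Lyap_rsum K A (fun i r c => rsum K (fun j => Xf i j r c))).
  rewrite (rsum_ext K _ (fun i => rsum K (fun j => elem_rhs i j (P i j) r c))).
  - rewrite (rsum_single K _ r Hr).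
    + rewrite (rsum_single K _ c Hc). unfold elem_rhs. rewrite !Nat.eqb_refl. auto.
      intros k Hk Hne. unfold elem_rhs. rewrite Nat.eqb_refl. apply Nat.eqb_neq in Hne. rewrite Nat.eqb_sym, Hne. auto.
    + intros k Hk Hne. apply rsum_zero. intros l Hl. unfold elem_rhs. apply Nat.eqb_neq in Hne. rewrite Nat.eqb_sym, Hne. auto.
  - intros i Hi. rewrite (Lyap_rsum K A (fun j r c => Xf i j r c)). apply rsum_ext. intros j Hj. apply HXf; auto. }
assert (HXY : forall r c, (r < K)%nat -> (c < K)%nat -> msub X Y r c = 0).
{ apply (Lyap_inj K A a b HA Hray Hb). intros r c Hr Hc. rewrite Lyap_sub.
  change (Lyap K A X r c) with (mmul K A X r c + mmul K X A r c). rewrite HX, HY by auto. ring. }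
unfold vec_entry.
assert (E := HXY (s mod K)%nat (s / K)%nat (mod_lt K s Hs) (div_lt K s Hs)). unfold msub in E.
replace (X (s mod K)%nat (s / K)%nat) with (Y (s mod K)%nat (s / K)%nat) by lra.
unfold Y. eapply Rle_trans; [apply rsum_abs|]. rewrite <- rsum_scal. apply rsum_le. intros i Hi.
eapply Rle_trans; [apply rsum_abs|]. rewrite <- rsum_scal. apply rsum_le. intros j Hj.
assert (H := Hent i j Hi Hj (Xf i j) (HXf i j) s Hs). unfold vec_entry in H.
eapply Rle_trans; [exact H|]. right. ring.
Qed.
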